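(* Let $\Delta$ be a triangle, $v$ a vertex, and $(\xi_m)_{m\ge0}$ the associated sequence of partitions of the angular interval $I$ at $v$, normalized to have length $1$, with $P_m$ the number of cutting points of $\xi_m$. Let $n\ge0$ and $c\ge 4$ be integers such that $e^c<P_n$ and $P_{n+c}\ge(4+2c)P_n$. Then there exist three cutting points $x_p,x_q,x_r$ in good position, with indices $p,q,r\in[n+1,n+c]$, whose pairwise distances are at most $e^c/P_n$.
   Context: Let $\Delta$ be a triangle and $v$ a vertex of $\Delta$. Identify the set of directions (rays) emanating from $v$ into $\Delta$ with an interval $I$ via angular coordinate, rescaled so that $I$ has length $1$. A generalized diagonal is a billiard orbit segment from a vertex to a vertex; its length is its number of reflections. A direction $x\in I$ whose billiard trajectory from $v$ is a generalized diagonal is assigned an index, namely the length of that generalized diagonal; we write $x_p$ for such a point of index $p$. The partition $\xi_m$ of $I$ is the partition into subintervals whose cutting points are exactly the directions of index at most $m$; $P_m$ is the number of its cutting points (the number of generalized diagonals from $v$ of length at most $m$). Three cutting points $x_p,x_q,x_r$ with indices $p<q<r$ are in good position if (1) $x_r$ lies strictly between $x_p$ and $x_q$, and (2) the open interval bounded by $x_p$ and $x_q$ contains no cutting point of index $\le r$ other than $x_r$. *)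

(* Defs.v *)
From HB Require Import structures.
From mathcomp Require Import all_boot all_order all_algebra.
From mathcomp Require Import finmap.
From mathcomp Require Import all_classical all_reals all_analysis.
Set Implicit Arguments. Unset Strict Implicit. Unset Printing Implicit Defensive.
Import Order.TTheory GRing.Theory Num.Theory.
Local Open Scope classical_set_scope.
Local Open Scope ring_scope.

Section Billiard.
Variable R : realType.
Definition pt := (R * R)%type.

Definition padd (p q : pt) : pt := (p.1 + q.1, p.2 + q.2).
Definition psub (p q : pt) : pt := (p.1 - q.1, p.2 - q.2).
Definition pscale (k : R) (p : pt) : pt := (k * p.1, k * p.2).
Definition pdot (p q : pt) : R := p.1 * q.1 + p.2 * q.2.
Definition pcross (p q : pt) : R := p.1 * q.2 - p.2 * q.1.
Definition pnorm (p : pt) : R := Num.sqrt (pdot p p).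

Definition tri_nondegenerate (a b c : pt) : Prop := pcross (psub b a) (psub c a) != 0.

Definition is_vertex (a b c p : pt) : Prop := p = a \/ p = b \/ p = c.

Definition on_open_seg (s t p : pt) : Prop :=
  exists l : R, 0 < l < 1 /\ p = padd (pscale (1 - l) s) (pscale l t).

Definition in_interior (a b c q : pt) : Prop :=
  exists al be ga : R, 0 < al /\ 0 < be /\ 0 < ga /\ al + be + ga = 1 /\
    q = padd (padd (pscale al a) (pscale be b)) (pscale ga c).

Definition open_seg_inside (a b c p q : pt) : Prop :=
  forall t : R, 0 < t < 1 -> in_interior a b c (padd (pscale (1 - t) p) (pscale t q)).

Definition reflect_dir (e d : pt) : pt :=
  psub (pscale (2 * pdot d e / pdot e e) e) d.

Definition on_side_dir (a b c p e : pt) : Prop :=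
  (on_open_seg a b p /\ e = psub b a) \/
  (on_open_seg b c p /\ e = psub c b) \/
  (on_open_seg c a p /\ e = psub a c).

(* angular coordinate at vertex a: x in [0,1] corresponds to the direction
   obtained by rotating the direction of side ab towards side ac by the angle
   x * (angle at a). *)
Definition uhat (a b : pt) : pt := pscale (pnorm (psub b a))^-1 (psub b a).
Definition nperp (a b c : pt) : pt :=
  let w := psub c a in
  let u := uhat a b in
  let v := psub w (pscale (pdot w u) u) in pscale (pnorm v)^-1 v.
Definition angle_at (a b c : pt) : R :=
  acos (pdot (uhat a b) (uhat a c)).
Definition dir_of (a b c : pt) (x : R) : pt :=
  padd (pscale (cos (x * angle_at a b c)) (uhat a b))
       (pscale (sin (x * angle_at a b c)) (nperp a b c)).

(* gen_diag a b c x k : the billiard trajectory from vertex a in the direction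
   with angular coordinate x is a generalized diagonal with exactly k
   reflections: points p_0 = a, p_1, ..., p_{k+1}; p_1..p_k interior points of
   sides, p_{k+1} a vertex, every open segment (p_i,p_{i+1}) inside the
   triangle, first segment in direction dir_of x, and the reflection law at
   each p_i (1 <= i <= k). *)
Definition gen_diag (a b c : pt) (x : R) (k : nat) : Prop :=
  0 <= x <= 1 /\
  exists p : nat -> pt,
    p 0%N = a /\
    is_vertex a b c (p k.+1) /\
    (forall i : nat, (i <= k)%N -> open_seg_inside a b c (p i) (p i.+1)) /\
    (exists l : R, 0 < l /\ psub (p 1%N) a = pscale l (dir_of a b c x)) /\
    (forall i : nat, (1 <= i <= k)%N ->
       exists e : pt, on_side_dir a b c (p i) e /\
       exists mu : R, 0 < mu /\
         psub (p i.+1) (p i) = pscale mu (reflect_dir e (psub (p i) (p i.-1)))).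

(* cutting points of xi_m: directions of index at most m *)
Definition cut_set (a b c : pt) (m : nat) : set R :=
  [set x | exists k : nat, (k <= m)%N /\ gen_diag a b c x k].

Definition Pcount (a b c : pt) (m : nat) : nat := #|` fset_set (cut_set a b c m)|%fset.

Definition good_position (a b c : pt) (x y z : R) (p q r : nat) : Prop :=
  (p < q < r)%N /\ gen_diag a b c x p /\ gen_diag a b c y q /\ gen_diag a b c z r /\
  (Num.min x y < z < Num.max x y) /\
  (forall w : R, Num.min x y < w < Num.max x y -> cut_set a b c r w -> w = z).

End Billiard.

(* Main.v *)
Require Import Defs.
From HB Require Import structures.
From mathcomp Require Import all_boot all_order all_algebra.
From mathcomp Require Import finmap.
From mathcomp Require Import all_classical all_reals all_analysis.
From mathcomp.algebra_tactics Require Import ring lra.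
From mathcomp Require Import zify.
Import Order.TTheory GRing.Theory Num.Theory.
Local Open Scope ring_scope.
Set Implicit Arguments. Unset Strict Implicit. Unset Printing Implicit Defensive.

Section CountLemmas.
Variable T : eqType.

Lemma count_or3 (p1 p2 p3 : pred T) (s : seq T) :
  (count (fun x => [|| p1 x, p2 x | p3 x]) s <= count p1 s + count p2 s + count p3 s)%N.
Proof.
elim: s => //= x s IH.
rewrite -!addnA; set A := count p1 s; set B := count p2 s; set C := count p3 s.
move: IH; rewrite -/A -/B -/C; case: (p1 x); case: (p2 x); case: (p3 x) => /= IH; lia.
Qed.

Lemma sum_has (q : nat -> pred T) (rs : seq nat) x :
  has (fun r => q r x) rs -> (0 < \sum_(r <- rs) q r x)%N.
Proof.
elim: rs => //= r rs IH; rewrite big_cons => /orP [h|h].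
- by rewrite h.
- by rewrite addn_gt0 IH ?orbT.
Qed.

Lemma count_cover (p : pred T) (q : nat -> pred T) (rs : seq nat) (s : seq T) :
  (forall x, x \in s -> p x -> has (fun r => q r x) rs) ->
  (count p s <= \sum_(r <- rs) count (q r) s)%N.
Proof.
elim: s => [|x s IH] h /=; first by rewrite big1.
rewrite (eq_bigr (fun r => q r x + count (q r) s)%N); last by move=> r _.
rewrite big_split /=.
apply: leq_add; last by apply: IH => y hy; apply: h; rewrite inE hy orbT.
case hp : (p x) => //.
apply: sum_has; apply: h; [by rewrite inE eqxx | by rewrite hp].
Qed.

End CountLemmas.

Section SeqLemmas.
Variable R : realFieldType.

Lemma seq_max (s : seq R) : s != [::] -> exists2 m, m \in s & forall x, x \in s -> x <= m.
Proof.
elim: s => // y s IH _; case: s IH => [|z s] IH.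
  by exists y; rewrite ?mem_seq1 // => x; rewrite mem_seq1 => /eqP ->.
have [m hm hmx] := IH isT.
case: (leP y m) => hym.
- exists m; first by rewrite inE hm orbT.
  by move=> x; rewrite inE => /orP [/eqP ->|/hmx].
- exists y; first by rewrite inE eqxx.
  move=> x; rewrite inE => /orP [/eqP ->//|/hmx hx]; exact: le_trans hx (ltW hym).
Qed.

Lemma count_split (O : seq R) (ob u : R) : ob \in O -> ob < u ->
  (count (fun x : R => (x < ob)%R) O < count (fun x : R => (x < u)%R) O)%N.
Proof.
move=> ho hou.
have e : count (fun x : R => (x < u)%R) O = (count (fun x : R => (x < ob)%R) O + count (fun x : R => ((ob <= x) && (x < u))%R) O)%N.
  rewrite -count_predUI.
  rewrite (@eq_count _ (predI _ _) pred0); last first.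
    by move=> x /=; case: (ltP x ob).
  rewrite count_pred0 addn0; apply: eq_count => x /=.
  case: (ltP x ob) => hxo /=; last by [].
  by rewrite (lt_trans hxo hou).
rewrite e -[X in (X < _)%N]addn0 ltn_add2l -has_count; apply/hasP; exists ob => //.
by rewrite lexx hou.
Qed.


Lemma sep_count_gen (O : seq R) N : forall Z : seq R, size Z = N -> uniq Z ->
  (forall z1 z2, z1 \in Z -> z2 \in Z -> z1 < z2 -> exists ob, ob \in O /\ z1 < ob < z2) ->
  forall u, (forall z, z \in Z -> z <= u) ->
  (size Z <= (count (fun x : R => (x < u)%R) O).+1)%N.
Proof.
elim: N => [|N IH] Z hs hu hsep u hZu; first by rewrite hs.
have hZ : Z != [::] by apply/eqP => h; rewrite h in hs.
have [M hM hMx] := seq_max hZ.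
set Z' := rem M Z.
have hs' : size Z' = N by rewrite size_rem // hs.
have hu' : uniq Z' := rem_uniq M hu.
have hsub : forall x, x \in Z' -> x \in Z by move=> x hx; exact: (mem_rem hx).
case hZ' : (Z' == [::]).
  by rewrite hs -hs' (eqP hZ').
have [M' hM' hM'x] := seq_max (negbT hZ').
have hM'M : M' < M.
  rewrite lt_neqAle hMx ?hsub // andbT.
  by move: hM'; rewrite /Z' mem_rem_uniq // inE => /andP [].
have [ob [ho /andP [h1 h2]]] := hsep M' M (hsub _ hM') hM hM'M.
have IH' := IH Z' hs' hu' (fun z1 z2 h1 h2 => hsep z1 z2 (hsub _ h1) (hsub _ h2)) ob
  (fun z hz => le_trans (hM'x z hz) (ltW h1)).
have hc := count_split ho (lt_le_trans h2 (hZu M hM)).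
by rewrite hs -hs'; apply: (leq_trans (n := (count (fun x : R => (x < ob)%R) O).+2)).
Qed.

Lemma sep_count (O Z : seq R) : uniq Z ->
  (forall z1 z2, z1 \in Z -> z2 \in Z -> z1 < z2 -> exists ob, ob \in O /\ z1 < ob < z2) ->
  (size Z <= (size O).+1)%N.
Proof.
move=> hu hsep; case hZ : (Z == [::]); first by rewrite (eqP hZ).
have [M hM hMx] := seq_max (negbT hZ).
apply: (leq_trans (sep_count_gen (erefl _) hu hsep hMx)).
by rewrite ltnS count_size.
Qed.


Lemma disj_count_gen (W : R -> R -> R -> Prop) (del : R) N : 0 < del ->
  (forall z L R', W z L R' -> 0 <= L /\ del < R' - L) ->
  forall Z : seq R, size Z = N -> uniq Z ->
  (forall z, z \in Z -> exists L R', W z L R') ->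
  (forall z1 z2 L1 R1 L2 R2, z1 \in Z -> z2 \in Z -> z1 < z2 -> W z1 L1 R1 -> W z2 L2 R2 -> R1 <= L2) ->
  forall u, 0 <= u -> (forall z L R', z \in Z -> W z L R' -> R' <= u) ->
  (size Z)%:R * del <= u.
Proof.
move=> hdel hW; elim: N => [|N IH] Z hs hu hex hdisj u hu0 hZu; first by rewrite hs mul0r.
have hZ : Z != [::] by apply/eqP => h; rewrite h in hs.
have [M hM hMx] := seq_max hZ.
have [LM [RM hWM]] := hex M hM.
have [hL0 hLR] := hW _ _ _ hWM.
set Z' := rem M Z.
have hs' : size Z' = N by rewrite size_rem // hs.
have hu' : uniq Z' := rem_uniq M hu.
have hsub : forall x, x \in Z' -> x \in Z by move=> x hx; exact: (mem_rem hx).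
have hlt : forall x, x \in Z' -> x < M.
  move=> x hx; rewrite lt_neqAle hMx ?hsub // andbT.
  by move: hx; rewrite /Z' mem_rem_uniq // inE => /andP [].
have IH' := IH Z' hs' hu' (fun z hz => hex z (hsub _ hz))
  (fun z1 z2 L1 R1 L2 R2 h1 h2 => hdisj z1 z2 L1 R1 L2 R2 (hsub _ h1) (hsub _ h2)) LM hL0
  (fun z L R' hz hw => hdisj z M L R' LM RM (hsub _ hz) hM (hlt _ hz) hw hWM).
have := hZu M LM RM hM hWM.
rewrite hs -hs' -addn1 natrD mulrDl mul1r; lra.
Qed.

End SeqLemmas.

Section Comb.
Variable R : realFieldType.
Variables (X : seq R) (idx : R -> nat) (n c : nat) (del : R).
Hypotheses (hX : uniq X) (h01 : forall x, x \in X -> 0 <= x <= 1)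
  (hidx : forall x, x \in X -> (idx x <= n + c)%N) (hdel : 0 < del)
  (hG : forall x y, x \in X -> y \in X -> x < y -> idx x = idx y ->
          exists w, w \in X /\ x < w < y /\ (idx w < idx x)%N).

Definition leftN z L := L \in X /\ (idx L < idx z)%N /\ L < z /\
  forall w, w \in X -> (idx w < idx z)%N -> ~ (L < w < z).
Definition rightN z R' := R' \in X /\ (idx R' < idx z)%N /\ z < R' /\
  forall w, w \in X -> (idx w < idx z)%N -> ~ (z < w < R').
Definition lgood z := exists L, leftN z L /\ (n < idx L)%N.
Definition rgood z := exists R', rightN z R' /\ (n < idx R')%N.
Definition CCp z := exists L R', leftN z L /\ rightN z R' /\ (n < idx L)%N /\ (n < idx R')%N /\ del < R' - L.

Definition triple := exists x y z, x \in X /\ y \in X /\ z \in X /\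
  (n < idx x)%N /\ (idx x < idx y)%N /\ (idx y < idx z)%N /\ (idx z <= n + c)%N /\
  Num.min x y < z < Num.max x y /\
  (forall w, w \in X -> (idx w <= idx z)%N -> Num.min x y < w < Num.max x y -> w = z) /\
  `|x - y| <= del /\ `|x - z| <= del /\ `|y - z| <= del.

Lemma seq_min (s : seq R) : s != [::] -> exists2 m, m \in s & forall x, x \in s -> m <= x.
Proof.
elim: s => // y s IH _; case: s IH => [|z s] IH.
  by exists y; rewrite ?mem_seq1 // => x; rewrite mem_seq1 => /eqP ->.
have [m hm hmx] := IH isT.
case: (leP m y) => hym.
- exists m; first by rewrite inE hm orbT.
  by move=> x; rewrite inE => /orP [/eqP ->|/hmx].
- exists y; first by rewrite inE eqxx.
  move=> x; rewrite inE => /orP [/eqP ->//|/hmx hx]; exact: le_trans (ltW hym) hx.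
Qed.

Lemma left_exists z w : w \in X -> (idx w < idx z)%N -> w < z -> exists L, leftN z L /\ w <= L.
Proof.
move=> hw hwi hwz.
set s := [seq x <- X | (idx x < idx z)%N && (x < z)].
have hws : w \in s by rewrite mem_filter hwi hwz hw.
have hs : s != [::] by apply/eqP => h; rewrite h in hws.
have [M hM hMx] := seq_max hs.
move: hM; rewrite mem_filter => /andP [/andP [hMi hMz] hMX].
exists M; split; last exact: hMx.
split; first exact: hMX. split; first exact: hMi. split; first exact: hMz.
move=> x hx hxi /andP [h1 h2].
have := hMx x; rewrite mem_filter hxi h2 hx => /(_ isT); by rewrite leNgt h1.
Qed.

Lemma right_exists z w : w \in X -> (idx w < idx z)%N -> z < w -> exists R', rightN z R' /\ R' <= w.
Proof.
move=> hw hwi hwz.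
set s := [seq x <- X | (idx x < idx z)%N && (z < x)].
have hws : w \in s by rewrite mem_filter hwi hwz hw.
have hs : s != [::] by apply/eqP => h; rewrite h in hws.
have [M hM hMx] := seq_min hs.
move: hM; rewrite mem_filter => /andP [/andP [hMi hMz] hMX].
exists M; split; last exact: hMx.
split; first exact: hMX. split; first exact: hMi. split; first exact: hMz.
move=> x hx hxi /andP [h1 h2].
have := hMx x; rewrite mem_filter hxi h1 hx => /(_ isT); by rewrite leNgt h2.
Qed.

Lemma key_ab z L R' w : leftN z L -> rightN z R' -> w \in X -> (idx w < idx z)%N ->
  L < w < R' -> False.
Proof.
move=> [_ [_ [hLz hL]]] [_ [_ [hzR hR]]] hw hwi /andP [h1 h2].
case: (ltgtP w z) => hwz.
- by apply: (hL w hw hwi); rewrite h1 hwz.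
- by apply: (hR w hw hwi); rewrite h2 hwz.
- by move: hwi; rewrite hwz ltnn.
Qed.


Lemma triple_of z L R' : z \in X -> leftN z L -> rightN z R' -> (n < idx L)%N -> (n < idx R')%N ->
  R' - L <= del -> triple.
Proof.
move=> hz hl hr hnL hnR hd.
have hl' := hl; have hr' := hr.
case: hl' => hLX [hLi [hLz _]]; case: hr' => hRX [hRi [hzR _]].
have hLR : L < R' by exact: lt_trans hLz hzR.
have hne : idx L != idx R'.
  apply/eqP => he; have [w [hw [/andP [h1 h2] hwi]]] := hG hLX hRX hLR he.
  apply: (key_ab hl hr hw (ltn_trans hwi hLi)); by rewrite h1 h2.
have hcond : forall w, w \in X -> (idx w <= idx z)%N -> L < w < R' -> w = z.
  move=> w hw hwi hwLR; case: (ltngtP (idx w) (idx z)) => hwz.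
  - by exfalso; apply: (key_ab hl hr hw hwz hwLR).
  - by move: hwi; rewrite leqNgt hwz.
  - case: (ltgtP w z) => hwz' //; exfalso.
    + have [u [hu [/andP [u1 u2] hui]]] := hG hw hz hwz' hwz.
      apply: (key_ab hl hr hu); first by rewrite -hwz.
      case/andP: hwLR => h1 h2; rewrite (lt_trans h1 u1) /=; exact: lt_trans u2 hzR.
    + have [u [hu [/andP [u1 u2] hui]]] := hG hz hw hwz' (esym hwz).
      apply: (key_ab hl hr hu) => //.
      case/andP: hwLR => h1 h2; rewrite (lt_trans hLz u1) /=; exact: lt_trans u2 h2.
have d1 : `|L - R'| <= del by rewrite distrC ger0_norm // subr_ge0 ltW.
have d2 : `|L - z| <= del by rewrite distrC ger0_norm ?subr_ge0 ?(ltW hLz) //; lra.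
have d3 : `|R' - z| <= del by rewrite ger0_norm ?subr_ge0 ?(ltW hzR) //; lra.
case: (ltngtP (idx L) (idx R')) => hc; last by rewrite hc eqxx in hne.
- exists L, R', z; do 3 (split => //); split => //; split => //; split => //; split; first exact: hidx.
  rewrite (min_l (ltW hLR)) (max_r (ltW hLR)) hLz hzR; split; first by [].
  by split; first exact: hcond.
- exists R', L, z; do 3 (split => //); split => //; split => //; split => //; split; first exact: hidx.
  rewrite (min_r (ltW hLR)) (max_l (ltW hLR)) hLz hzR; split; first by [].
  split; first exact: hcond.
  by split; [rewrite distrC | split].
Qed.


Lemma sum_const_seq (K : R) (rs : seq nat) : \sum_(r <- rs) K = (size rs)%:R * K.
Proof.
elim: rs => [|r rs IH]; first by rewrite big_nil mul0r.
by rewrite big_cons IH /= -addn1 natrD mulrDl mul1r addrC.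
Qed.

Lemma comb_main : triple \/
  (count (fun x => (n < idx x)%N) X)%:R <=
    c%:R * (2 * (count (fun x => (idx x <= n)%N) X).+1%:R + 1 / del).
Proof.
case: (pselect triple) => ht; [by left | right].
set P := count (fun x => (idx x <= n)%N) X.
pose LB r z := (idx z == r) && ~~ `[< lgood z >].
pose RB r z := (idx z == r) && ~~ `[< rgood z >].
pose CB r z := (idx z == r) && `[< CCp z >].
have hcov : forall z, z \in X -> (n < idx z)%N ->
    has (fun r => [|| LB r z, RB r z | CB r z]) (iota n.+1 c).
  move=> z hz hnz; apply/hasP; exists (idx z).
    by rewrite mem_iota hnz /= addSn ltnS hidx.
  rewrite /LB /RB /CB eqxx /=.
  case: (pselect (lgood z)) => hlg; last by apply/orP; left; apply/negP => /asboolP.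
  case: (pselect (rgood z)) => hrg; last by apply/orP; right; apply/orP; left; apply/negP => /asboolP.
  apply/orP; right; apply/orP; right; apply/asboolP.
  case: hlg => L [hl hnL]; case: hrg => R' [hr hnR].
  exists L, R'; do 4 (split => //).
  rewrite ltNge; apply/negP => hd; apply: ht; exact: triple_of hz hl hr hnL hnR hd.
have h1 := count_cover hcov.
have hLB : forall r, (count (LB r) X <= P.+1)%N.
  move=> r; rewrite -size_filter /P -size_filter.
  apply: sep_count; first exact: filter_uniq.
  move=> z1 z2; rewrite !mem_filter /LB => /andP [/andP [/eqP e1 _] hz1] /andP [/andP [/eqP e2 hn2] hz2] h12.
  have [w [hw [/andP [w1 w2] hwi]]] := hG hz1 hz2 h12 (etrans e1 (esym e2)).
  rewrite e1 -e2 in hwi.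
  have [L [hl hwL]] := left_exists hw hwi w2.
  exists L; split; last first.
    by case: hl => _ [_ [hLz _]]; rewrite (lt_le_trans w1 hwL) hLz.
  rewrite mem_filter; case: hl => hLX [hLi hrest]; rewrite hLX andbT leqNgt.
  apply/negP => hnL; move/negP: hn2; apply; apply/asboolP.
  by exists L; split.
have hRB : forall r, (count (RB r) X <= P.+1)%N.
  move=> r; rewrite -size_filter /P -size_filter.
  apply: sep_count; first exact: filter_uniq.
  move=> z1 z2; rewrite !mem_filter /RB => /andP [/andP [/eqP e1 hn1] hz1] /andP [/andP [/eqP e2 _] hz2] h12.
  have [w [hw [/andP [w1 w2] hwi]]] := hG hz1 hz2 h12 (etrans e1 (esym e2)).
  have [R' [hr hwR]] := right_exists hw hwi w1.
  exists R'; split; last first.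
    by case: hr => _ [_ [hzR _]]; rewrite hzR (le_lt_trans hwR w2).
  rewrite mem_filter; case: hr => hRX [hRi hrest]; rewrite hRX andbT leqNgt.
  apply/negP => hnR; move/negP: hn1; apply; apply/asboolP.
  by exists R'; split.
have hCB : forall r, (count (CB r) X)%:R * del <= 1.
  move=> r; rewrite -size_filter.
  pose W z L R' := leftN z L /\ rightN z R' /\ (n < idx L)%N /\ (n < idx R')%N /\ del < R' - L.
  apply: (@disj_count_gen _ W del _ hdel) => //.
  - move=> z L R' [[hLX _] [_ [_ [_ hd]]]]; split => //.
    by case/andP: (h01 hLX).
  - exact: filter_uniq.
  - by move=> z; rewrite mem_filter /CB => /andP [/andP [_ /asboolP]].
  - move=> z1 z2 L1 R1 L2 R2; rewrite !mem_filter /CB => /andP [/andP [/eqP e1 _] hz1]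
      /andP [/andP [/eqP e2 _] hz2] h12 [_ [[_ [_ [_ hR1]]] _]] [[_ [_ [_ hL2]]] _].
    have [w [hw [/andP [w1 w2] hwi]]] := hG hz1 hz2 h12 (etrans e1 (esym e2)).
    have hR1w : R1 <= w by rewrite leNgt; apply/negP => h; apply: (hR1 w hw hwi); rewrite w1 h.
    have hwL2 : w <= L2.
      rewrite leNgt; apply/negP => h; apply: (hL2 w hw); last by rewrite h w2.
      by rewrite e2 -e1.
    exact: le_trans hR1w hwL2.
  - move=> z L R' _ [_ [[hRX _] _]]; by case/andP: (h01 hRX).
have hsum : (count (fun x => (n < idx x)%N) X)%:R <=
    \sum_(r <- iota n.+1 c) (2 * P.+1%:R + 1 / del).
  apply: (le_trans (y := (\sum_(r <- iota n.+1 c) count (fun z => [|| LB r z, RB r z | CB r z]) X)%:R)).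
    by rewrite ler_nat.
  rewrite natr_sum; apply: ler_sum => r _.
  apply: (le_trans (y := (count (LB r) X + count (RB r) X + count (CB r) X)%:R)).
    by rewrite ler_nat count_or3.
  rewrite !natrD.
  have a1 : (count (LB r) X)%:R <= P.+1%:R :> R by rewrite ler_nat.
  have a2 : (count (RB r) X)%:R <= P.+1%:R :> R by rewrite ler_nat.
  have a3 : (count (CB r) X)%:R <= 1 / del by rewrite ler_pdivlMr // hCB.
  lra.
by rewrite sum_const_seq size_iota in hsum.
Qed.

End Comb.

Section Geo.
Variable R : realType.
Variables a b c : pt R.
Hypothesis nd : tri_nondegenerate a b c.

Definition D := pcross (psub b a) (psub c a).
Lemma D_neq0 : D != 0. Proof. exact: nd. Qed.

Inductive vx := VA | VB | VC.
Definition vx_eqb (u v : vx) := match u, v with VA,VA|VB,VB|VC,VC => true | _,_ => false end.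
Lemma vx_eqP : Equality.axiom vx_eqb. Proof. by case; case; constructor. Qed.
HB.instance Definition _ := hasDecEq.Build vx vx_eqP.

Definition vert v := match v with VA => a | VB => b | VC => c end.
Definition lam v (y : pt R) : R := match v with
 | VA => pcross (psub b y) (psub c y) / D
 | VB => pcross (psub c y) (psub a y) / D
 | VC => pcross (psub a y) (psub b y) / D end.

Definition comb2 (s : R) (u w : pt R) : pt R := padd (pscale (1 - s) u) (pscale s w).

Lemma lam_comb2 v s u w : lam v (comb2 s u w) = (1 - s) * lam v u + s * lam v w.
Proof.
case: v; case: u => u1 u2; case: w => w1 w2; rewrite /lam /comb2 /pcross /psub /padd /pscale /=; ring.
Qed.

Lemma lam_vert v w : lam v (vert w) = if vx_eqb v w then 1 else 0.
Proof.
have H := D_neq0; rewrite /D /pcross /psub in H.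
case: v; case: w; rewrite /lam /D /pcross /psub /=; field; exact: H.
Qed.


Lemma lam_sum y : lam VA y + lam VB y + lam VC y = 1.
Proof.
have H := D_neq0; rewrite /D /pcross /psub in H.
case: y => y1 y2; rewrite /lam /D /pcross /psub /=; field; exact: H.
Qed.

Definition comb3 (al be ga : R) (u1 u2 u3 : pt R) : pt R :=
  padd (padd (pscale al u1) (pscale be u2)) (pscale ga u3).

Lemma lam_comb3 v al be ga u1 u2 u3 : al + be + ga = 1 ->
  lam v (comb3 al be ga u1 u2 u3) = al * lam v u1 + be * lam v u2 + ga * lam v u3.
Proof.
move=> h; have -> : ga = 1 - al - be by rewrite -h; ring.
case: v; case: u1 => x1 x2; case: u2 => y1 y2; case: u3 => z1 z2;
 rewrite /lam /comb3 /pcross /psub /padd /pscale /=; ring.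
Qed.

Lemma lam_rec y : y = comb3 (lam VA y) (lam VB y) (lam VC y) a b c.
Proof.
have H := D_neq0; rewrite /D /pcross /psub in H.
case: y => y1 y2; rewrite /comb3 /lam /D /pcross /psub /padd /pscale /=.
congr pair; field; exact: H.
Qed.

Lemma pt_eq_lam y z : (forall v, lam v y = lam v z) -> y = z.
Proof. by move=> h; rewrite (lam_rec y) (lam_rec z) !h. Qed.

Lemma vx_neq u v : (u != v) = ~~ vx_eqb u v.
Proof. by []. Qed.


Definition onside v y := lam v y = 0 /\ (forall w, w != v -> 0 < lam w y).
Definition side y := if lam VA y == 0 then VA else if lam VB y == 0 then VB else VC.

Lemma onside_side v y : onside v y -> side y = v.
Proof.
case=> h0 hp; rewrite /side; case: v h0 hp => h0 hp.
- by rewrite h0 eqxx.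
- by rewrite h0 eqxx gt_eqF //; apply: hp.
- by rewrite !gt_eqF //; apply: hp.
Qed.

Lemma onside_uniq v w y : onside v y -> onside w y -> v = w.
Proof. by move=> /onside_side <- /onside_side <-. Qed.

Lemma comb2_E s u w : comb2 s u w = comb3 (1 - s) s 0 u w u.
Proof.
case: u => ??; case: w => ??; rewrite /comb2 /comb3 /padd /pscale /=; congr pair; ring.
Qed.

Lemma lam_comb2' v s u w : lam v (comb2 s u w) = (1 - s) * lam v u + s * lam v w.
Proof. by rewrite comb2_E lam_comb3 ?mul0r ?addr0 //; ring. Qed.

Lemma vert_lam v w : lam v (vert w) = if vx_eqb v w then 1 else 0.
Proof. exact: lam_vert. Qed.


Definition nx v := match v with VA => VB | VB => VC | VC => VA end.
Definition sfrom v := vert (nx v).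
Definition sto v := vert (nx (nx v)).
Definition sdir v := psub (sto v) (sfrom v).

Lemma onside_openseg v p : onside v p <-> on_open_seg (sfrom v) (sto v) p.
Proof.
split.
- case=> h0 hp; rewrite /on_open_seg.
  have hs := lam_sum p.
  case: v h0 hp => h0 hp;
  [have h1 := hp VB isT; have h2 := hp VC isT; exists (lam VC p)
  |have h1 := hp VA isT; have h2 := hp VC isT; exists (lam VA p)
  |have h1 := hp VA isT; have h2 := hp VB isT; exists (lam VB p)];
  (split; [apply/andP; split; lra|]); apply: pt_eq_lam => w; rewrite -/(comb2 _ _ _) lam_comb2' /sfrom /sto;
  case: w; rewrite !vert_lam; simpl vx_eqb; cbv iota; lra.
- case=> l [/andP [l0 l1] ->]; rewrite -/(comb2 _ _ _).
  case: v; (split; [rewrite lam_comb2' /sfrom /sto !vert_lam; simpl vx_eqb; cbv iota; lra|]);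
  case=> // _; rewrite lam_comb2' /sfrom /sto !vert_lam; simpl vx_eqb; cbv iota; lra.
Qed.


Lemma side_dirP p e : on_side_dir a b c p e <-> exists v, onside v p /\ e = sdir v.
Proof.
split.
- case=> [[h ->]|[[h ->]|[h ->]]].
  + by exists VC; split => //; apply/onside_openseg.
  + by exists VA; split => //; apply/onside_openseg.
  + by exists VB; split => //; apply/onside_openseg.
- case=> v [/onside_openseg h ->]; case: v h => h.
  + by right; left.
  + by right; right.
  + by left.
Qed.

Lemma interiorP y : in_interior a b c y <-> forall v, 0 < lam v y.
Proof.
split.
- case=> al [be [ga [h1 [h2 [h3 [h4 ->]]]]]] v.
  change (0 < lam v (comb3 al be ga (vert VA) (vert VB) (vert VC))).
  rewrite lam_comb3 //.
  by case: v; rewrite !vert_lam; simpl vx_eqb; cbv iota; lra.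
- move=> h; exists (lam VA y), (lam VB y), (lam VC y); do 3 (split; first exact: h).
  by split; [exact: lam_sum | exact: lam_rec].
Qed.

Lemma seg_not_inside u w v : open_seg_inside a b c u w -> lam v u = 0 -> lam v w = 0 -> False.
Proof.
move=> h hu hw; have /interiorP := h (1/2) ltac:(apply/andP; split; lra).
move=> /(_ v); rewrite -/(comb2 _ _ _) lam_comb2' hu hw; lra.
Qed.

Lemma seg_inside u w : (forall v, 0 <= lam v u) -> (forall v, 0 <= lam v w) ->
  (forall v, 0 < lam v u \/ 0 < lam v w) -> open_seg_inside a b c u w.
Proof.
move=> hu hw h t /andP [t0 t1]; apply/interiorP => v; rewrite -/(comb2 _ _ _) lam_comb2'.
have := hu v; have := hw v; case: (h v); nra.
Qed.

Lemma onside_ge0 v y w : onside v y -> 0 <= lam w y.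
Proof.
case=> h0 hp; case: (w =P v) => [->|/eqP hn]; first by rewrite h0.
by apply/ltW/hp.
Qed.

Lemma vert_ge0 v w : 0 <= lam w (vert v).
Proof. by rewrite vert_lam; case: ifP. Qed.

Lemma vert_self v : lam v (vert v) = 1.
Proof. by rewrite vert_lam; case: v. Qed.

Lemma vertexP p : is_vertex a b c p <-> exists v, p = vert v.
Proof.
split; first by case=> [->|[->|->]]; [exists VA|exists VB|exists VC].
by case=> [[]] ->; rewrite /is_vertex; tauto.
Qed.


Lemma pair_eqE (u w : pt R) : u = w <-> u.1 = w.1 /\ u.2 = w.2.
Proof. by case: u; case: w => ????; split => [[-> ->]|[/= -> ->]]. Qed.

Lemma R_scale (e d : pt R) k : reflect_dir e (pscale k d) = pscale k (reflect_dir e d).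
Proof.
case: e => ??; case: d => ??; rewrite /reflect_dir /pscale /psub /pdot /=; congr pair; ring.
Qed.

Lemma R_invol (e d : pt R) : pdot e e != 0 -> reflect_dir e (reflect_dir e d) = d.
Proof.
case: e => e1 e2; case: d => ??; rewrite /reflect_dir /pscale /psub /pdot /= => h.
congr pair; field; exact: h.
Qed.

Lemma sumsq0 (x y : R) : x * x + y * y = 0 -> x = 0 /\ y = 0.
Proof.
move=> h; have hx : 0 <= x * x by rewrite -expr2 sqr_ge0.
have hy : 0 <= y * y by rewrite -expr2 sqr_ge0.
have ex : x * x = 0 by lra.
have ey : y * y = 0 by lra.
by move/eqP: ex; rewrite mulf_eq0 orbb => /eqP; move/eqP: ey; rewrite mulf_eq0 orbb => /eqP.
Qed.

Lemma sdir_nz v : pdot (sdir v) (sdir v) != 0.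
Proof.
have H := D_neq0; rewrite /D /pcross /psub in H.
apply/negP => /eqP h; move: H; rewrite /sdir /sto /sfrom /pdot /psub in h.
case: v h => /= h.
- have [h1 h2] := sumsq0 h.
  have -> : (b.1 - a.1) * (c.2 - a.2) - (b.2 - a.2) * (c.1 - a.1) =
    (b.1 - a.1) * (c.2 - b.2) - (b.2 - a.2) * (c.1 - b.1) by ring.
  by rewrite h1 h2 !mulr0 subrr eqxx.
- have [h1 h2] := sumsq0 h.
  have -> : (b.1 - a.1) * (c.2 - a.2) - (b.2 - a.2) * (c.1 - a.1) =
    (b.1 - c.1) * (c.2 - a.2) - (b.2 - c.2) * (c.1 - a.1) - ((a.1 - c.1) * (c.2 - a.2) - (a.2 - c.2) * (c.1 - a.1)) by ring.
  have -> : c.2 - a.2 = - (a.2 - c.2) by ring.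
  have -> : c.1 - a.1 = - (a.1 - c.1) by ring.
  by rewrite h1 h2 !(oppr0, mulr0, mul0r) !subrr eqxx.
- have [h1 h2] := sumsq0 h.
  by rewrite h1 h2 !mul0r subrr eqxx.
Qed.

Lemma online v p : lam v p = 0 -> p = comb2 (lam (nx (nx v)) p) (sfrom v) (sto v).
Proof.
move=> h0; have hs := lam_sum p.
apply: pt_eq_lam => w; rewrite lam_comb2' /sfrom /sto.
case: v h0 => h0; case: w; rewrite !vert_lam; simpl vx_eqb; cbv iota; simpl nx; lra.
Qed.

Definition refl v y := padd (sfrom v) (reflect_dir (sdir v) (psub y (sfrom v))).

Lemma refl_on v p y : lam v p = 0 -> psub (refl v y) p = reflect_dir (sdir v) (psub y p).
Proof.
move=> /online ->; have := sdir_nz v.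
rewrite /refl /sdir; set t := lam _ _; move: (sfrom v) (sto v) => [u1 u2] [w1 w2].
case: y => ??; rewrite /comb2 /reflect_dir /pscale /psub /padd /pdot /= => h.
congr pair; field; exact: h.
Qed.

Lemma psub_swap (u w : pt R) : psub u w = pscale (-1) (psub w u).
Proof. case: u; case: w => ????; rewrite /psub /pscale /=; congr pair; ring. Qed.

Lemma refl_fwd v y z : lam v y = 0 ->
  psub y (refl v z) = reflect_dir (sdir v) (psub y z).
Proof.
move=> h; rewrite psub_swap refl_on // -R_scale -psub_swap //.
Qed.

Lemma refl_back v y z : lam v y = 0 ->
  psub y z = reflect_dir (sdir v) (psub y (refl v z)).
Proof. by move=> h; rewrite refl_fwd // R_invol // sdir_nz. Qed.


Definition traj x k (p : nat -> pt R) :=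
    p 0%N = a /\
    is_vertex a b c (p k.+1) /\
    (forall i : nat, (i <= k)%N -> open_seg_inside a b c (p i) (p i.+1)) /\
    (exists l : R, 0 < l /\ psub (p 1%N) a = pscale l (dir_of a b c x)) /\
    (forall i : nat, (1 <= i <= k)%N ->
       exists e : pt R, on_side_dir a b c (p i) e /\
       exists mu : R, 0 < mu /\
         psub (p i.+1) (p i) = pscale mu (reflect_dir e (psub (p i) (p i.-1)))).

Lemma gen_diagP x k : gen_diag a b c x k <-> (0 <= x <= 1 /\ exists p, traj x k p).
Proof. by []. Qed.

Fixpoint src (p : nat -> pt R) (i : nat) : pt R :=
  match i with 0%N => a | i'.+1 => refl (side (p i'.+1)) (src p i') end.

Lemma alg_step (P Pn S1 X : pt R) t mu : 0 < t -> 0 < mu ->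
  psub P S1 = pscale t X -> psub Pn P = pscale mu X ->
  psub Pn S1 = pscale (1 + t / mu) (psub Pn P) /\ Pn = comb2 ((mu + t) / t) S1 P.
Proof.
case: P => p1 p2; case: Pn => n1 n2; case: S1 => s1 s2; case: X => x1 x2.
rewrite /psub /pscale /comb2 /padd /= => ht hm [e1 e2] [f1 f2].
have ht' : t != 0 by rewrite gt_eqF.
have hm' : mu != 0 by rewrite gt_eqF.
have -> : s1 = p1 - t * x1 by lra.
have -> : s2 = p2 - t * x2 by lra.
have -> : n1 = p1 + mu * x1 by lra.
have -> : n2 = p2 + mu * x2 by lra.
by split; congr pair; field.
Qed.

Section Traj.
Variables (x : R) (k : nat) (p : nat -> pt R).
Hypothesis tr : traj x k p.

Lemma T_side i : (1 <= i <= k)%N -> onside (side (p i)) (p i) /\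
  exists mu, 0 < mu /\ psub (p i.+1) (p i) = pscale mu (reflect_dir (sdir (side (p i))) (psub (p i) (p i.-1))).
Proof.
case: tr => _ [_ [_ [_ h]]] /h [e [/side_dirP [v [hv ->]] hm]].
by rewrite (onside_side hv).
Qed.

Lemma T_seg i : (i <= k)%N -> open_seg_inside a b c (p i) (p i.+1).
Proof. by case: tr => _ [_ [h _]]; apply: h. Qed.

Lemma T_consec i : (1 <= i)%N -> (i < k)%N -> side (p i) != side (p i.+1).
Proof.
move=> h1 h2; apply/eqP => he.
have hi1 : (1 <= i <= k)%N by rewrite h1 (ltnW h2).
have hi2 : (1 <= i.+1 <= k)%N by rewrite h2.
have [[hs0 _] _] := T_side hi1.
have [[hs1 _] _] := T_side hi2.
apply: (seg_not_inside (T_seg (ltnW h2)) hs0); by rewrite he.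
Qed.

Lemma T_k : (1 <= k)%N.
Proof.
case: k tr => // tr0.
case: tr0 => h0 [/vertexP [w hw] [hseg _]].
have := hseg 0%N (leqnn _); rewrite h0 hw => hs; exfalso.
have ha : lam VB a = 0 /\ lam VC a = 0 by rewrite (_ : a = vert VA) // !vert_lam.
case: w hw hs => _ hs.
- by apply: (seg_not_inside hs (v := VB)); rewrite ?vert_lam; case: ha.
- by apply: (seg_not_inside hs (v := VC)); rewrite ?vert_lam; case: ha.
- by apply: (seg_not_inside hs (v := VB)); rewrite ?vert_lam; case: ha.
Qed.

Lemma T_first : side (p 1%N) = VA.
Proof.
have [[hs0 _] _] := T_side (i := 1%N) ltac:(by rewrite T_k).
have hs := T_seg (leq0n k).
case: tr => h0 _; rewrite h0 in hs.
move: hs0 hs; case: (side (p 1%N)) => // hs0 hs.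
- by exfalso; apply: (seg_not_inside hs (v := VB) _ hs0); rewrite (_ : a = vert VA) // vert_lam.
- by exfalso; apply: (seg_not_inside hs (v := VC) _ hs0); rewrite (_ : a = vert VA) // vert_lam.
Qed.

Lemma T_last : p k.+1 = vert (side (p k)).
Proof.
have [[hs0 _] _] := T_side (i := k) ltac:(by rewrite T_k leqnn).
have hs := T_seg (leqnn k).
case: tr => _ [/vertexP [w hw] _]; rewrite hw in hs *.
move: hs0 hs; case: (side (p k)) => hs0 hs; case: w hw hs => // hw hs; exfalso;
  (apply: (seg_not_inside hs _ _ ); [exact: hs0 | by rewrite vert_lam]).
Qed.


Lemma T_IF i : (1 <= i <= k.+1)%N ->
  (exists t, 1 <= t /\ psub (p i) (src p i.-1) = pscale t (psub (p i) (p i.-1))) /\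
  ((i <= k)%N -> exists rho, 1 < rho /\ p i.+1 = comb2 rho (src p i) (p i)).
Proof.
elim: i => // i IH /andP [hi1 hi2].
have hI : exists t, 1 <= t /\ psub (p i.+1) (src p i) = pscale t (psub (p i.+1) (p i)).
  case: i IH hi1 hi2 => [|i] IH _ hi2.
  - exists 1; split => //=; case: tr => -> _.
    by case: (p 1%N) => ??; rewrite /psub /pscale /=; congr pair; ring.
  - have [[t [t1 ht]] hF] := IH ltac:(by rewrite /= ltnW).
    have hik : (1 <= i.+1 <= k)%N by [].
    have [[hs0 _] [mu [hmu hm]]] := T_side hik.
    have e1 : psub (p i.+1) (src p i.+1) = pscale t (reflect_dir (sdir (side (p i.+1))) (psub (p i.+1) (p i))).
      by rewrite /= refl_fwd // ht R_scale.
    have [hA hB] := alg_step (lt_le_trans ltr01 t1) hmu e1 hm.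
    exists (1 + t / mu); split; last exact: hA.
    by rewrite lerDl divr_ge0 // ltW // (lt_le_trans ltr01 t1).
split => // hik.
have [[hs0 _] [mu [hmu hm]]] := T_side (i := i.+1) ltac:(by rewrite hik).
case: hI => t [t1 ht].
have e1 : psub (p i.+1) (src p i.+1) = pscale t (reflect_dir (sdir (side (p i.+1))) (psub (p i.+1) (p i))).
  by rewrite /= refl_fwd // ht R_scale.
have tp : 0 < t by apply: (lt_le_trans ltr01 t1).
have [hA hB] := alg_step tp hmu e1 hm.
exists ((mu + t) / t); split => //.
by rewrite ltr_pdivlMr // mul1r ltrDr.
Qed.

Lemma T_F i : (1 <= i <= k)%N -> exists rho, 1 < rho /\ p i.+1 = comb2 rho (src p i) (p i).
Proof.
move=> /andP [h1 h2]; have := T_IF (i := i) ltac:(by rewrite h1 (leq_trans h2)).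
by case=> _; apply.
Qed.

Lemma T_R i y : (1 <= i)%N -> lam (side (p i)) y = 0 ->
  psub y (src p i.-1) = reflect_dir (sdir (side (p i))) (psub y (src p i)).
Proof. by case: i => // i _ h; rewrite /= -refl_back. Qed.

End Traj.


Definition U := uhat a b.
Definition Nv := nperp a b c.
Definition th := angle_at a b c.

Lemma dirE x : dir_of a b c x = padd (pscale (cos (x * th)) U) (pscale (sin (x * th)) Nv).
Proof. by []. Qed.

Lemma cross_comb c1 s1 c2 s2 (u w : pt R) :
  pcross (padd (pscale c1 u) (pscale s1 w)) (padd (pscale c2 u) (pscale s2 w)) =
  (c1 * s2 - s1 * c2) * pcross u w.
Proof. case: u; case: w => ????; rewrite /pcross /padd /pscale /=; ring. Qed.

Lemma pdot_self_ge0 (v : pt R) : 0 <= pdot v v.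
Proof. case: v => x y; rewrite /pdot /=; nra. Qed.

Lemma unit_scale (v : pt R) : 0 < pdot v v ->
  pdot (pscale (pnorm v)^-1 v) (pscale (pnorm v)^-1 v) = 1.
Proof.
move=> hv; rewrite /pnorm.
have hs := sqr_sqrtr (ltW hv).
have hs0 : Num.sqrt (pdot v v) != 0 by rewrite sqrtr_eq0 -ltNge.
move: hs hs0; move: (Num.sqrt _) => q; case: v hv => v1 v2; rewrite /pdot /pscale /= => hv hq hq0.
rewrite expr2 in hq.
transitivity ((v1 * v1 + v2 * v2) / (q * q)); first by field.
by rewrite -hq divff // mulf_neq0.
Qed.

Lemma pnorm_gt0 (v : pt R) : 0 < pdot v v -> 0 < pnorm v.
Proof. by move=> h; rewrite /pnorm sqrtr_gt0. Qed.

Lemma dot_pos_of_cross (v w : pt R) : pcross v w != 0 -> 0 < pdot v v.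
Proof.
case: v w => v1 v2 [w1 w2]; rewrite /pcross /pdot /= => h.
rewrite lt_neqAle; apply/andP; split; last by nra.
apply/negP => /eqP /esym /sumsq0 [h1 h2]; move: h; rewrite h1 h2 !mul0r subrr eqxx //.
Qed.

Lemma cross_swap (v w : pt R) : pcross v w = - pcross w v.
Proof. case: v w => ?? [??]; rewrite /pcross /=; ring. Qed.

Lemma ab_pos : 0 < pdot (psub b a) (psub b a).
Proof. exact: (dot_pos_of_cross D_neq0). Qed.

Lemma ac_pos : 0 < pdot (psub c a) (psub c a).
Proof. apply: (dot_pos_of_cross (w := psub b a)); rewrite cross_swap oppr_eq0; exact: D_neq0. Qed.

Lemma lagrange (u w : pt R) : pdot u w ^+ 2 + pcross u w ^+ 2 = pdot u u * pdot w w.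
Proof. case: u w => ?? [??]; rewrite /pcross /pdot /=; ring. Qed.

Lemma th_bounds : 0 < th < pi.
Proof.
set u := uhat a b; set w := uhat a c.
have hu : pdot u u = 1 by exact: unit_scale ab_pos.
have hw : pdot w w = 1 by exact: unit_scale ac_pos.
have hc : pcross u w != 0.
  have pa := pnorm_gt0 ab_pos; have pc := pnorm_gt0 ac_pos.
  rewrite /u /w /uhat; move: D_neq0 pa pc; rewrite /D.
  move: (pnorm (psub b a)) (pnorm (psub c a)) => na nc.
  move: (psub b a) (psub c a) => [x1 x2] [y1 y2].
  rewrite /pcross /pscale /= => hD ha hc.
  have -> : na^-1 * x1 * (nc^-1 * y2) - na^-1 * x2 * (nc^-1 * y1) = (na^-1 * nc^-1) * (x1 * y2 - x2 * y1) by ring.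
  by rewrite mulf_eq0 negb_or hD andbT mulf_eq0 negb_or !invr_eq0 !gt_eqF.
have hl := lagrange u w; rewrite hu hw mul1r in hl.
have hc2 : 0 < pcross u w ^+ 2 by rewrite exprn_even_gt0 //= hc orbT.
have hd : -1 < pdot u w < 1.
  set d := pdot u w in hl *; set e := pcross u w ^+ 2 in hl hc2.
  apply/andP; split; nra.
rewrite /th /angle_at -/u -/w; case/andP: hd => h1 h2.
by rewrite acos_gt0 ?acos_ltpi ?(ltW h1) ?(ltW h2) ?h1 ?h2.
Qed.


Lemma cross_scale_r k (u w : pt R) : pcross u (pscale k w) = k * pcross u w.
Proof. case: u w => ?? [??]; rewrite /pcross /pscale /=; ring. Qed.
Lemma cross_scale_l k (u w : pt R) : pcross (pscale k u) w = k * pcross u w.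
Proof. case: u w => ?? [??]; rewrite /pcross /pscale /=; ring. Qed.

Lemma cross_proj (u w : pt R) k : pcross u (psub w (pscale k u)) = pcross u w.
Proof. case: u w => ?? [??]; rewrite /pcross /psub /pscale /=; ring. Qed.

Lemma UN_cross : pcross U Nv != 0.
Proof.
have pa := pnorm_gt0 ab_pos.
have hUw : pcross U (psub c a) != 0.
  by rewrite /U /uhat cross_scale_l mulf_eq0 negb_or invr_eq0 gt_eqF //; exact: D_neq0.
set v' := psub (psub c a) (pscale (pdot (psub c a) U) U).
have hv : pcross U v' = pcross U (psub c a) by rewrite /v' cross_proj.
have hvp : 0 < pdot v' v'.
  apply: (dot_pos_of_cross (w := U)); rewrite cross_swap oppr_eq0 hv //.
rewrite /Nv /nperp -/U -/v' cross_scale_r hv mulf_eq0 negb_or hUw andbT invr_eq0 gt_eqF //.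
exact: pnorm_gt0.
Qed.

Lemma sin_pos_arg (y : R) : - pi < y -> 0 < sin y -> 0 < y.
Proof.
move=> h1 h2; rewrite ltNge; apply/negP => hy.
have : 0 <= sin (- y) by apply: sin_ge0_pi; apply/andP; split; lra.
rewrite sinN; lra.
Qed.

Lemma dir_inj z1 z2 g : 0 <= z1 <= 1 -> 0 <= z2 <= 1 ->
  dir_of a b c z1 = pscale g (dir_of a b c z2) -> z1 = z2.
Proof.
move=> /andP [h10 h11] /andP [h20 h21] he.
have /andP [t0 tp] := th_bounds.
have hc : pcross (dir_of a b c z1) (dir_of a b c z2) = 0.
  by rewrite he cross_scale_l; case: (dir_of _ _ _ _) => ??; rewrite /pcross /=; ring.
rewrite !dirE cross_comb in hc.
have hs : sin (z2 * th - z1 * th) = 0.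
  move/eqP: hc; rewrite mulf_eq0 (negbTE UN_cross) orbF => /eqP hc.
  by rewrite sinB; lra.
have hb1 : - pi < z2 * th - z1 * th by nra.
have hb2 : - pi < z1 * th - z2 * th by nra.
case: (ltrgtP z1 z2) => // hlt; exfalso.
- have : 0 < sin (z2 * th - z1 * th) by apply: sin_gt0_pi; apply/andP; split; nra.
  by rewrite hs ltxx.
- have : 0 < sin (z1 * th - z2 * th) by apply: sin_gt0_pi; apply/andP; split; nra.
  by rewrite -opprB sinN hs oppr0 ltxx.
Qed.


Lemma dir_cone z1 z2 al be : 0 <= z1 -> z1 < z2 -> z2 <= 1 -> 0 < al -> 0 < be ->
  exists x L, z1 < x < z2 /\ 0 < L /\
   padd (pscale al (dir_of a b c z1)) (pscale be (dir_of a b c z2)) = pscale L (dir_of a b c x).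
Proof.
move=> h10 h12 h21 hal hbe.
have /andP [t0 tp] := th_bounds.
set f1 := z1 * th; set f2 := z2 * th.
have hf1 : 0 <= f1 by rewrite /f1; nra.
have hf12 : f1 < f2 by rewrite /f1 /f2; nra.
have hf2 : f2 <= th by rewrite /f2; nra.
have s2p : 0 < sin f2 by apply: sin_gt0_pi; apply/andP; split; lra.
have s1p : 0 <= sin f1 by apply: sin_ge0_pi; apply/andP; split; lra.
have s21 : 0 < sin (f2 - f1) by apply: sin_gt0_pi; apply/andP; split; lra.
rewrite sinB in s21.
set c1 := cos f1 in s21 *; set c2 := cos f2 in s21 *; set s1 := sin f1 in s1p s21 *; set s2 := sin f2 in s2p s21 *.
set w1 := al * c1 + be * c2; set w2 := al * s1 + be * s2.
have w2p : 0 < w2 by rewrite /w2; nra.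
set rho := Num.sqrt (w1 ^+ 2 + w2 ^+ 2).
have hr2 : rho ^+ 2 = w1 ^+ 2 + w2 ^+ 2 by rewrite sqr_sqrtr // addr_ge0 // sqr_ge0.
have rp : 0 < rho by rewrite sqrtr_gt0; nra.
have rne : rho != 0 by rewrite gt_eqF.
set y := w1 / rho.
have hyr : y * rho = w1 by rewrite /y mulfVK.
have hy2 : y ^+ 2 <= 1.
  have h1 : y ^+ 2 * rho ^+ 2 <= 1 * rho ^+ 2.
    by rewrite mul1r -exprMn hyr hr2 lerDl sqr_ge0.
  by rewrite ler_pM2r ?exprn_gt0 // in h1.
have hy : -1 <= y <= 1 by rewrite expr2 in hy2; apply/andP; split; nra.
set phi := acos y.
have hcos : cos phi = y by rewrite /phi acosK // in_itv /=.
have hsin : sin phi = w2 / rho.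
  rewrite /phi sin_acos //.
  have -> : 1 - y ^+ 2 = (w2 / rho) ^+ 2.
    rewrite /y; apply: (mulIf (x := rho ^+ 2)); first by rewrite expf_neq0.
    rewrite mulrBl mul1r (_ : (w1 / rho) ^+ 2 * rho ^+ 2 = w1 ^+ 2); last by field.
    rewrite (_ : (w2 / rho) ^+ 2 * rho ^+ 2 = w2 ^+ 2); last by field.
    rewrite hr2; ring.
  by rewrite sqrtr_sqr ger0_norm // divr_ge0 // ltW.
have ph0 : 0 <= phi by apply: acos_ge0.
have phpi : phi <= pi by apply: acos_lepi.
have e1 : sin (phi - f1) = be * (s2 * c1 - c2 * s1) / rho.
  rewrite sinB hcos hsin -/c1 -/s1 /y /w1 /w2; field; exact: rne.
have e2 : sin (f2 - phi) = al * (s2 * c1 - c2 * s1) / rho.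
  rewrite sinB hcos hsin -/c2 -/s2 /y /w1 /w2; field; exact: rne.
have q1 : 0 < be * (s2 * c1 - c2 * s1) / rho by apply: divr_gt0 => //; apply: mulr_gt0 => //; lra.
have q2 : 0 < al * (s2 * c1 - c2 * s1) / rho by apply: divr_gt0 => //; apply: mulr_gt0 => //; lra.
have g1 : 0 < phi - f1 by apply: sin_pos_arg; [lra | rewrite e1].
have g2 : 0 < f2 - phi by apply: sin_pos_arg; [lra | rewrite e2].
have tne : th != 0 by rewrite gt_eqF.
exists (phi / th), rho; split; last split => //.
- apply/andP; split.
  + by rewrite ltr_pdivlMr // -/f1; lra.
  + by rewrite ltr_pdivrMr // -/f2; lra.
- rewrite !dirE (_ : phi / th * th = phi); last by field.
  rewrite hcos hsin -/f1 -/f2 -/c1 -/c2 -/s1 -/s2.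
  move: U Nv => [u1 u2] [n1 n2]; rewrite /padd /pscale /=.
  congr pair; rewrite /y /w1 /w2; field; exact: rne.
Qed.


Lemma lam_sum3 s s1 s2 y : s != s1 -> s != s2 -> s1 != s2 ->
  lam s y + lam s1 y + lam s2 y = 1.
Proof. by have := lam_sum y; case: s; case: s1; case: s2 => //=; lra. Qed.

Lemma pt_eq_lam2 s1 s2 y z : s1 != s2 -> lam s1 y = lam s1 z -> lam s2 y = lam s2 z -> y = z.
Proof.
move=> hn h1 h2; apply: pt_eq_lam => v.
have := lam_sum y; have := lam_sum z.
by case: s1 h1 hn; case: s2 h2; case: v => //= h2 h1 _; lra.
Qed.

Lemma comb2_sub rho (s0 x : pt R) : psub (comb2 rho s0 x) s0 = pscale rho (psub x s0).
Proof. case: s0 x => ?? [??]; rewrite /comb2 /psub /padd /pscale /=; congr pair; ring. Qed.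

Lemma comb3_sub al be (A P Q : pt R) : psub (comb3 (1 - al - be) al be A P Q) A =
  padd (pscale al (psub P A)) (pscale be (psub Q A)).
Proof. case: A P Q => ?? [??] [??]; rewrite /comb3 /psub /padd /pscale /=; congr pair; ring. Qed.

Lemma comb2_comb3 t (B P Q : pt R) : comb2 t P Q = comb3 (1 - (1 - t) - t) (1 - t) t B P Q.
Proof. case: B P Q => ?? [??] [??]; rewrite /comb3 /comb2 /psub /padd /pscale /=; congr pair; ring. Qed.

Lemma onside_conv s t (P Q : pt R) : 0 < t < 1 -> onside s P -> onside s Q -> onside s (comb2 t P Q).
Proof.
move=> /andP [t0 t1] [hP0 hP] [hQ0 hQ]; split; first by rewrite lam_comb2' hP0 hQ0; ring.
by move=> w hw; rewrite lam_comb2'; have := hP w hw; have := hQ w hw; nra.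
Qed.

Lemma comb_ident (A' P Q' : pt R) r1 r2 al be : al * r1 + be * r2 != 0 ->
  comb2 (be * r2 / (al * r1 + be * r2)) P Q' =
  comb2 (1 / (al * r1 + be * r2)) A' (comb3 (1 - al - be) al be A' (comb2 r1 A' P) (comb2 r2 A' Q')).
Proof.
move=> h; case: A' P Q' => [??] [??] [??].
rewrite /comb2 /comb3 /padd /pscale /=; congr pair; field; exact: h.
Qed.

Lemma step_lemma s (A' P Q' Pn Qn Q : pt R) r1 r2 al be :
  1 < r1 -> 1 < r2 -> 0 < al -> 0 < be ->
  Pn = comb2 r1 A' P -> Qn = comb2 r2 A' Q' -> onside s P -> onside s Q' ->
  0 < lam s Q -> lam s A' < 0 -> Q = comb3 (1 - al - be) al be A' Pn Qn ->
  exists C kap t, 0 < t < 1 /\ C = comb2 t P Q' /\ onside s C /\ 0 < kap < 1 /\ C = comb2 kap A' Q.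
Proof.
move=> h1 h2 hal hbe hPn hQn hP hQ' hQ hA hQe.
set m := al * r1 + be * r2.
have mp : 0 < m by rewrite /m; nra.
have mne : m != 0 by rewrite gt_eqF.
set t := be * r2 / m.
have ht : 0 < t < 1.
  apply/andP; split; first by rewrite /t divr_gt0 //; nra.
  by rewrite /t ltr_pdivrMr // mul1r /m; nra.
have hC := onside_conv ht hP hQ'.
have hCe : comb2 t P Q' = comb2 (1 / m) A' Q.
  rewrite hQe hPn hQn /t; exact: comb_ident.
exists (comb2 t P Q'), (1 / m), t; do 3 (split => //).
split => //; apply/andP; split; first by rewrite divr_gt0.
case: hC => hC0 _; move: hC0; rewrite hCe lam_comb2' => hC0.
rewrite ltNge; apply/negP => hk.
have : 0 < (1 - 1 / m) * lam s A' + 1 / m * lam s Q.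
  have : 0 <= (1 - 1/m) * lam s A' by apply: mulr_le0; lra.
  have : 0 < 1 / m * lam s Q by apply: mulr_gt0 => //; rewrite divr_gt0.
  lra.
by rewrite hC0 ltxx.
Qed.


Lemma cone_top s s1 s2 (A' P Q' Pn Qn : pt R) r1 r2 :
  s != s1 -> s != s2 -> s1 != s2 -> 1 < r1 -> 1 < r2 ->
  Pn = comb2 r1 A' P -> Qn = comb2 r2 A' Q' -> onside s P -> onside s Q' ->
  onside s1 Pn -> onside s2 Qn ->
  exists al be, 0 < al /\ 0 < be /\ vert s = comb3 (1 - al - be) al be A' Pn Qn.
Proof.
move=> n1 n2 n12 h1 h2 hPn hQn [hP0 hP] [hQ0 hQ] [hPn0 hPnp] [hQn0 hQnp].
have l1P : 0 < lam s1 P by apply: hP; rewrite eq_sym.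
have l2Q : 0 < lam s2 Q' by apply: hQ; rewrite eq_sym.
have lsPn : 0 < lam s Pn by apply: hPnp.
have lsQn : 0 < lam s Qn by apply: hQnp.
have P2 : 0 < lam s2 Pn by apply: hPnp; rewrite eq_sym.
have Q1 : 0 < lam s1 Qn by apply: hQnp.
have sP := lam_sum3 Pn n1 n2 n12.
have sQ := lam_sum3 Qn n1 n2 n12.
have sA := lam_sum3 A' n1 n2 n12.
have e1 := lam_comb2' s1 r1 A' P; rewrite -hPn hPn0 in e1.
have e2 := lam_comb2' s2 r2 A' Q'; rewrite -hQn hQn0 in e2.
have e3 := lam_comb2' s r1 A' P; rewrite -hPn hP0 in e3.
set A1 := lam s1 A' in e1 sA *; set A2 := lam s2 A' in e2 sA *; set As := lam s A' in e3 sA *.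
have A1p : 0 < A1 by nra.
have A2p : 0 < A2 by nra.
have Asn : As < 0 by nra.
set p2 := lam s2 Pn in P2 sP *; set q1 := lam s1 Qn in Q1 sQ *.
have p2l : p2 < 1 by lra.
have q1l : q1 < 1 by lra.
set K := A2 / p2 + A1 / q1.
have hK1 : A2 < A2 / p2 by rewrite ltr_pdivlMr //; nra.
have hK2 : A1 < A1 / q1 by rewrite ltr_pdivlMr //; nra.
have Kp : 1 < K by rewrite /K; lra.
have Kne : K - 1 != 0 by rewrite subr_eq0 gt_eqF.
have p2ne : p2 != 0 by rewrite gt_eqF.
have q1ne : q1 != 0 by rewrite gt_eqF.
exists (A2 / (p2 * (K - 1))), (A1 / (q1 * (K - 1))); split; last split.
- by rewrite divr_gt0 // mulr_gt0 // subr_gt0.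
- by rewrite divr_gt0 // mulr_gt0 // subr_gt0.
apply: (pt_eq_lam2 n12).
- rewrite lam_comb3; last by ring.
  rewrite vert_lam (negbTE (_ : ~~ vx_eqb s1 s)); last by rewrite eq_sym in n1.
  rewrite -/A1 hPn0 -/q1 /K; field.
  rewrite q1ne p2ne /=.
  have -> : A2 * q1 + A1 * p2 + -1 * (p2 * q1) = p2 * q1 * (K - 1) by rewrite /K; field; rewrite q1ne p2ne.
  by rewrite !mulf_neq0.
- rewrite lam_comb3; last by ring.
  rewrite vert_lam (negbTE (_ : ~~ vx_eqb s2 s)); last by rewrite eq_sym in n2.
  rewrite -/A2 hQn0 -/p2 /K; field.
  rewrite q1ne p2ne /=.
  have -> : A2 * q1 + A1 * p2 + -1 * (p2 * q1) = p2 * q1 * (K - 1) by rewrite /K; field; rewrite q1ne p2ne.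
  by rewrite !mulf_neq0.
Qed.


Lemma seg_side_side v1 v2 (u w : pt R) : v1 != v2 -> onside v1 u -> onside v2 w -> open_seg_inside a b c u w.
Proof.
move=> hn hu hw; apply: seg_inside => [x|x|v]; [exact: onside_ge0 hu|exact: onside_ge0 hw|].
case: (v =P v1) => [->|/eqP h]; last by left; case: hu => _; apply.
by right; case: hw => _; apply.
Qed.

Lemma seg_side_vert v u : onside v u -> open_seg_inside a b c u (vert v).
Proof.
move=> hu; apply: seg_inside => [w|w|w]; [exact: onside_ge0 hu|exact: vert_ge0|].
case: (w =P v) => [->|/eqP h]; last by left; case: hu => _; apply.
by right; rewrite vert_lam; case: (v) => /=; lra.
Qed.

Lemma seg_vert_side v u : onside v u -> open_seg_inside a b c (vert v) u.
Proof.
move=> hu; apply: seg_inside => [w|w|w]; [exact: vert_ge0|exact: onside_ge0 hu|].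
case: (w =P v) => [->|/eqP h]; last by right; case: hu => _; apply.
by left; rewrite vert_lam; case: (v) => /=; lra.
Qed.

Lemma comb2_back kap (S N : pt R) : kap != 0 ->
  psub N (comb2 kap S N) = pscale ((1 - kap) / kap) (psub (comb2 kap S N) S).
Proof.
move=> h; case: S N => ?? [??]; rewrite /comb2 /psub /padd /pscale /=; congr pair; field; exact: h.
Qed.

Lemma refl_law_alg (e S S0 Pm N Y : pt R) kap f :
  pdot e e != 0 -> 0 < kap < 1 -> 0 < f -> Y = comb2 kap S N ->
  psub Y Pm = pscale f (psub Y S0) -> psub Y S0 = reflect_dir e (psub Y S) ->
  exists mu, 0 < mu /\ psub N Y = pscale mu (reflect_dir e (psub Y Pm)).
Proof.
move=> he /andP [k0 k1] hf hY h1 h2.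
exists ((1 - kap) / (kap * f)); split.
  by apply: divr_gt0; [lra | apply: mulr_gt0].
rewrite h1 R_scale h2 R_invol //.
have -> : psub N Y = pscale ((1 - kap) / kap) (psub Y S) by rewrite hY comb2_back ?gt_eqF.
case: (psub Y S) => ??; rewrite /pscale /=; congr pair; field; rewrite ?gt_eqF //.
Qed.


Lemma down_ind (P : nat -> Prop) n : P n -> (forall i, (i < n)%N -> P i.+1 -> P i) ->
  forall i, (i <= n)%N -> P i.
Proof.
move=> hn hs i hi; have -> : i = (n - (n - i))%N by rewrite subKn.
elim: (n - i)%N (leq_subr i n) => [|d IH] hd; first by rewrite subn0.
have e : (n - d.+1).+1 = (n - d)%N by rewrite subnSK.
apply: hs; last by rewrite e; apply: IH; rewrite ltnW.
by rewrite -subn_gt0 subKn ?(ltnW hd).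
Qed.

Lemma pscale1 (X : pt R) : pscale 1 X = X.
Proof. by case: X => ??; rewrite /pscale !mul1r. Qed.

Lemma pscale_comp g h (X : pt R) : pscale g (pscale h X) = pscale (g * h) X.
Proof. by case: X => ??; rewrite /pscale !mulrA. Qed.

Lemma scale_cancel (l g : R) (X Y : pt R) : l != 0 -> pscale l X = pscale g Y -> X = pscale (g / l) Y.
Proof.
move=> hl; case: X Y => x1 x2 [y1 y2]; rewrite /pscale /= => [[e1 e2]]; congr pair;
 apply: (mulfI hl); rewrite ?e1 ?e2; field; exact: hl.
Qed.

Lemma comb2_fwd kap (S N : pt R) : psub N (comb2 kap S N) = pscale (1 - kap) (psub N S).
Proof. case: S N => ?? [??]; rewrite /comb2 /psub /padd /pscale /=; congr pair; ring. Qed.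

Section Two.
Variables (z1 z2 : R) (k : nat) (p q : nat -> pt R).
Hypotheses (trp : traj z1 k p) (trq : traj z2 k q).
Hypotheses (h10 : 0 <= z1) (h12 : z1 < z2) (h21 : z2 <= 1).

Lemma src_eq m : (forall i, (1 <= i <= m)%N -> side (p i) = side (q i)) -> src p m = src q m.
Proof.
elim: m => // m IH h /=; rewrite h ?leqnn // IH // => i /andP [h1 h2]; apply: h.
by rewrite h1 ltnW.
Qed.

Lemma caseA : (forall i, (1 <= i <= k)%N -> side (p i) = side (q i)) -> False.
Proof.
move=> hag.
have hk := T_k trp.
have hsrc : forall i, (i <= k)%N -> src p i = src q i.
  by move=> i hi; apply: src_eq => l /andP [l1 l2]; apply: hag; rewrite l1 (leq_trans l2).
have hlast : p k.+1 = q k.+1 by rewrite (T_last trp) (T_last trq) hag // hk leqnn.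
pose P i := exists g, 0 < g /\ psub (p i.+1) (src p i) = pscale g (psub (q i.+1) (src p i)).
have P0 : P 0%N.
  apply: (down_ind (P := P) (n := k)) => //.
  - by exists 1; split => //; rewrite pscale1 hlast.
  move=> i hi [g [gp hg]].
  have hi1 : (1 <= i.+1 <= k)%N by [].
  have [rp [rp1 hp]] := T_F trp hi1.
  have [rq [rq1 hq]] := T_F trq hi1.
  rewrite -(hsrc _ hi) in hq.
  have ep : psub (p i.+2) (src p i.+1) = pscale rp (psub (p i.+1) (src p i.+1)) by rewrite hp comb2_sub.
  have eq : psub (q i.+2) (src p i.+1) = pscale rq (psub (q i.+1) (src p i.+1)) by rewrite hq comb2_sub.
  rewrite ep eq pscale_comp in hg.
  have rpne : rp != 0 by rewrite gt_eqF // (lt_trans ltr01).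
  have hX := scale_cancel rpne hg.
  have [[hs0 _] _] := T_side trp hi1.
  have [[hq0 _] _] := T_side trq hi1.
  exists (g * rq / rp); split; first by apply: divr_gt0; [apply: mulr_gt0 => //; lra| lra].
  have eP : psub (p i.+1) (src p i) = _ := T_R (p := p) (i := i.+1) isT hs0.
  have eQ : psub (q i.+1) (src q i) = _ := T_R (p := q) (i := i.+1) isT hq0.
  rewrite -(hag _ hi1) -(hsrc _ hi1) -(hsrc _ (ltnW hi)) in eQ.
  by rewrite eP hX R_scale eQ.
case: P0 => g [gp hg]; rewrite /= in hg.
case: trp => _ [_ [_ [[l1 [l1p e1]] _]]].
case: trq => _ [_ [_ [[l2 [l2p e2]] _]]].
rewrite e1 e2 pscale_comp in hg.
have hz1 : 0 <= z1 <= 1 by apply/andP; split; [exact: h10 | exact: ltW (lt_le_trans h12 h21)].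
have hz2 : 0 <= z2 <= 1 by apply/andP; split; [exact: ltW (le_lt_trans h10 h12) | exact: h21].
have he := dir_inj hz1 hz2 (scale_cancel (lt0r_neq0 l1p) hg).
by move: h12; rewrite he ltxx.
Qed.


Lemma caseB m : (m.+2 <= k)%N -> (forall i, (1 <= i <= m.+1)%N -> side (p i) = side (q i)) ->
  side (p m.+2) != side (q m.+2) -> exists w, z1 < w < z2 /\ gen_diag a b c w m.+1.
Proof.
move=> hmk hag hdiff.
have hsrc : forall i, (i <= m.+1)%N -> src p i = src q i.
  by move=> i hi; apply: src_eq => l /andP [l1 l2]; apply: hag; rewrite l1 (leq_trans l2).
set s := side (p m.+1).
have hik : forall i, (1 <= i <= m.+1)%N -> (1 <= i <= k)%N.
  by move=> i /andP [h1 h2]; rewrite h1 (leq_trans h2) // ltnW.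
have hik2 : (1 <= m.+2 <= k)%N by rewrite hmk.
have hcons : forall i, (1 <= i <= m.+1)%N -> side (p i) != side (p i.+1).
  by move=> i /andP [h1 h2]; apply: (T_consec trp h1); rewrite (leq_ltn_trans h2).
have hm1 : (1 <= m.+1 <= m.+1)%N by rewrite leqnn.
have hagm := hag _ hm1.
have [r1 [r1p hP]] := T_F trp (hik _ hm1).
have [r2 [r2p hQ]] := T_F trq (hik _ hm1).
rewrite -hsrc ?leqnn // in hQ.
have [[hpm _] _] := T_side trp (hik _ hm1).
have [[hqm _] _] := T_side trq (hik _ hm1).
rewrite -hagm -/s in hqm.
have [[hp2 _] _] := T_side trp hik2.
have [[hq2 _] _] := T_side trq hik2.
have n1 : s != side (p m.+2) by apply: hcons; rewrite leqnn.
have n2 : s != side (q m.+2).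
  by have := T_consec trq (i := m.+1) isT hmk; rewrite -hagm.
have hpm' : onside s (p m.+1) by apply: (proj1 (T_side trp (hik _ hm1))).
have hqm' : onside s (q m.+1).
  by have := proj1 (T_side trq (hik _ hm1)); rewrite -hagm.
have [al0 [be0 [al0p [be0p hV]]]] := cone_top n1 n2 hdiff r1p r2p hP hQ hpm' hqm'
  (proj1 (T_side trp hik2)) (proj1 (T_side trq hik2)).
pose Hp i := exists ps : nat -> pt R, ps m.+2 = vert s /\
  (forall l, (i < l)%N -> (l < m.+2)%N -> onside (side (p l)) (ps l) /\
      exists kap, 0 < kap < 1 /\ ps l = comb2 kap (src p l) (ps l.+1)) /\
  exists al be, 0 < al /\ 0 < be /\ ps i.+1 = comb3 (1 - al - be) al be (src p i) (p i.+1) (q i.+1).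
have H0 : Hp 0%N.
  apply: (down_ind (P := Hp) (n := m.+1)) => //.
  - exists (fun _ => vert s); split => //; split.
    + by move=> l h1 h2; exfalso; move: h1; rewrite ltnNge -ltnS h2.
    + by exists al0, be0.
  move=> i hi [ps [hps [hl [al [be [alp [bep hc]]]]]]].
  have hi1 : (1 <= i.+1 <= m.+1)%N by [].
  have [r1' [r1p' hP']] := T_F trp (hik _ hi1).
  have [r2' [r2p' hQ']] := T_F trq (hik _ hi1).
  rewrite -hsrc // in hQ'.
  set sI := side (p i.+1).
  have hPi : onside sI (p i.+1) := proj1 (T_side trp (hik _ hi1)).
  have hQi : onside sI (q i.+1) by rewrite /sI hag //; exact: (proj1 (T_side trq (hik _ hi1))).
  have hn2 : sI != side (p i.+2) := hcons _ hi1.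
  have hik3 : (1 <= i.+2 <= k)%N by rewrite (leq_trans _ hmk).
  have hP2 : 0 < lam sI (p i.+2).
    by case: (T_side trp hik3) => [[_ hh] _]; apply: hh.
  have hA : lam sI (src p i.+1) < 0.
    move: hP2; rewrite hP' lam_comb2' (proj1 hPi) mulr0 addr0 => hh.
    by nra.
  have hQpos : 0 < lam sI (ps i.+2).
    case: (ltngtP i m) => him.
    + have [hon _] := hl i.+2 (ltnSn _) ltac:(by rewrite ltnS).
      by case: hon => _; apply.
    + by exfalso; move: hi; rewrite ltnS leqNgt him.
    + by rewrite him hps /sI him -/s vert_self.
  have [C [kap [t [ht [hCt [hCs [hk hCk]]]]]]] :=
    step_lemma r1p' r2p' alp bep hP' hQ' hPi hQi hQpos hA hc.
  exists (fun l => if l == i.+1 then C else ps l); split.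
    by rewrite (_ : (m.+2 == i.+1) = false) // eqSS; apply/negbTE; rewrite neq_ltn hi orbT.
  split.
  - move=> l h1 h2; case: (l =P i.+1) => [->|hne].
    + split => //; exists kap; split => //.
      by rewrite (_ : (i.+2 == i.+1) = false) ?hCk // eqSS; apply/negbTE; rewrite neq_ltn ltnSn orbT.
    + have h1' : (i.+1 < l)%N by rewrite ltn_neqAle eq_sym h1 andbT; apply/eqP.
      have [hon [kk [hkk hkc]]] := hl l h1' h2.
      split => //; exists kk; split => //.
      by rewrite (_ : (l.+1 == i.+1) = false) // eqSS; apply/negbTE; rewrite neq_ltn (ltnW h1') orbT.
  - exists (1 - t), t; case/andP: ht => t0 t1; split; first lra; split => //.
    by rewrite eqxx hCt (comb2_comb3 _ (src p i)).
case: H0 => ps [hps [hl [al [be [alp [bep hc]]]]]].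
case: (trp) => hp0 [_ [_ [[l1 [l1p e1]] _]]].
case: (trq) => hq0 [_ [_ [[l2 [l2p e2]] _]]].
have hd : psub (ps 1%N) a = padd (pscale (al * l1) (dir_of a b c z1)) (pscale (be * l2) (dir_of a b c z2)).
  by rewrite hc comb3_sub e1 e2 !pscale_comp.
have [x [L [hx [hL hdx]]]] := dir_cone h10 h12 h21 (mulr_gt0 alp l1p) (mulr_gt0 bep l2p).
rewrite -hd in hdx.
exists x; split => //.
apply/gen_diagP; split.
  case/andP: hx => hx1 hx2; apply/andP; split.
  - exact: ltW (le_lt_trans h10 hx1).
  - exact: ltW (lt_le_trans hx2 h21).
pose pp l := if l == 0%N then a else ps l.
have hsl : forall l, (0 < l)%N -> (l < m.+2)%N -> onside (side (p l)) (ps l).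
  by move=> l h1 h2; case: (hl l h1 h2).
have hs1 : side (p 1%N) = VA := T_first trp.
exists pp; split; first by [].
split; first by apply/vertexP; exists s; rewrite /pp /= hps.
split.
  move=> l hl1; rewrite /pp.
  case: l hl1 => [|l] hl1 /=.
  - have := hsl 1%N isT isT; rewrite hs1 => hon.
    by rewrite (_ : a = vert VA) //; apply: seg_vert_side.
  - case: (ltngtP l m) => hlm.
    + have h1 := hsl l.+1 isT ltac:(by rewrite ltnS ltnW).
      have h2 := hsl l.+2 isT ltac:(by rewrite !ltnS).
      apply: (seg_side_side _ h1 h2); apply: hcons; rewrite /= ltnW //.
    + by exfalso; move: hl1; rewrite ltnNge hlm.
    + rewrite hlm hps; apply: seg_side_vert; exact: (hsl m.+1 isT (ltnSn _)).
split; first by exists L; split => //; rewrite /pp /=.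
move=> l /andP [hl1 hl2].
have hlt : (l < m.+2)%N by [].
have [hon [kap [hkap hkc]]] := hl l hl1 hlt.
have hpl : pp l = ps l by rewrite /pp (negbTE (lt0n_neq0 hl1)).
exists (sdir (side (p l))); split; first by rewrite hpl; apply/side_dirP; exists (side (p l)); split.
have hpl1 : pp l.+1 = ps l.+1 by [].
have hR : psub (ps l) (src p l.-1) = reflect_dir (sdir (side (p l))) (psub (ps l) (src p l)).
  exact: T_R hl1 (proj1 hon).
rewrite hpl hpl1.
have [f [fp hf]] : exists f, 0 < f /\ psub (ps l) (pp l.-1) = pscale f (psub (ps l) (src p l.-1)).
  case: l hl1 hl2 hlt hon hkc hpl hpl1 hR => [|[|l]] // hl1 hl2 hlt hon hkc hpl hpl1 hR.
  - by exists 1; split => //; rewrite pscale1.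
  - have [_ [kap' [hkap' hkc']]] := hl l.+1 isT ltac:(by rewrite ltnW).
    exists (1 - kap'); split; first by case/andP: hkap' => _; lra.
    by rewrite /pp /= hkc' comb2_fwd.
exact: refl_law_alg (sdir_nz _) hkap fp hkc hf hR.
Qed.

End Two.


Lemma G_main z1 z2 k : z1 < z2 -> gen_diag a b c z1 k -> gen_diag a b c z2 k ->
  exists w j, z1 < w < z2 /\ (j < k)%N /\ gen_diag a b c w j.
Proof.
move=> h12 /gen_diagP [/andP [h10 _] [p trp]] /gen_diagP [/andP [_ h21] [q trq]].
case: (pselect (exists i, (1 <= i <= k)%N && (side (p i) != side (q i)))) => hex; last first.
  exfalso; apply: (caseA trp trq h10 h12 h21) => i hi.
  case: (side (p i) =P side (q i)) => // /eqP hne; exfalso; apply: hex; exists i; by rewrite hi hne.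
case: (ex_minnP hex) => j /andP [/andP [hj1 hjk] hjd] hjm.
have hs1 : side (p 1%N) = side (q 1%N) by rewrite (T_first trp) (T_first trq).
case: j hj1 hjk hjd hjm => [|[|m]] // _ hjk hjd hjm.
  by rewrite hs1 eqxx in hjd.
have hag : forall i, (1 <= i <= m.+1)%N -> side (p i) = side (q i).
  move=> i /andP [hi1 hi2]; case: (side (p i) =P side (q i)) => // /eqP hne; exfalso.
  have := hjm i; rewrite hi1 hne (leq_trans hi2) ?andbT; last by rewrite ltnW // ltnW.
  by move=> /(_ isT); rewrite leqNgt ltnS hi2.
have [w [hw hg]] := caseB trp trq h10 h12 h21 hjk hag hjd.
by exists w, m.+1; split => //; split.
Qed.

End Geo.

Section Final.
Variable R : realType.
Variables (a b c : pt R).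

Lemma fset_set_nfin (A : set R) : ~ finite_set A -> fset_set A = fset0.
Proof. by move=> h; rewrite /fset_set; case: pselect. Qed.

Lemma card_pos_fin (A : set R) : (0 < #|` fset_set A|)%N -> finite_set A.
Proof.
move=> h; case: (pselect (finite_set A)) => // hn.
by rewrite fset_set_nfin // in h.
Qed.

Lemma memE (A : set R) x : finite_set A -> (x \in enum_fset (fset_set A)) <-> A x.
Proof.
move=> hf; have := in_fset_set hf x; rewrite /= => e.
have -> : (x \in enum_fset (fset_set A)) = (x \in fset_set A) by [].
by rewrite e in_setE.
Qed.

Lemma cut_mono m1 m2 x : (m1 <= m2)%N -> cut_set a b c m1 x -> cut_set a b c m2 x.
Proof. by move=> h [k [hk hg]]; exists k; split => //; apply: leq_trans hk h. Qed.

Variable N : nat.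
Definition idx (x : R) := find (fun k => `[< gen_diag a b c x k >]) (iota 0 N.+1).

Lemma idx_spec x : cut_set a b c N x ->
  [/\ gen_diag a b c x (idx x), (idx x <= N)%N & forall k, gen_diag a b c x k -> (idx x <= k)%N].
Proof.
case=> k [hk hg].
have hhas : has (fun k => `[< gen_diag a b c x k >]) (iota 0 N.+1).
  by apply/hasP; exists k; [rewrite mem_iota | apply/asboolP].
have hlt : (idx x < N.+1)%N by move: hhas; rewrite has_find size_iota.
split.
- have := nth_find 0%N hhas; rewrite -/(idx x) nth_iota // add0n => /asboolP //.
- by rewrite -ltnS.
- move=> k' hk'; rewrite leqNgt; apply/negP => hlt'.
  have := before_find 0%N hlt'; rewrite nth_iota ?add0n; last exact: ltn_trans hlt.
  by move=> /negP; apply; apply/asboolP.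
Qed.

Lemma cut_idx r x : (r <= N)%N -> cut_set a b c N x -> cut_set a b c r x <-> (idx x <= r)%N.
Proof.
move=> hr hx; have [hg hN hmin] := idx_spec hx; split.
- by case=> k [hk hk']; apply: leq_trans (hmin _ hk') hk.
- by move=> h; exists (idx x).
Qed.

End Final.

Unset Implicit Arguments.

Theorem lemma2p2 (R : realType) (a b c : pt R) (n c0 : nat) :
  tri_nondegenerate a b c ->
  (4 <= c0)%N ->
  expR (c0%:R : R) < (Pcount a b c n)%:R ->
  ((4 + 2 * c0) * Pcount a b c n <= Pcount a b c (n + c0))%N ->
  exists (x y z : R) (p q r : nat),
    good_position a b c x y z p q r /\
    (n.+1 <= p)%N /\ (n.+1 <= q)%N /\ (n.+1 <= r)%N /\
    (p <= n + c0)%N /\ (q <= n + c0)%N /\ (r <= n + c0)%N /\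
    `|x - y| <= expR (c0%:R) / (Pcount a b c n)%:R /\
    `|x - z| <= expR (c0%:R) / (Pcount a b c n)%:R /\
    `|y - z| <= expR (c0%:R) / (Pcount a b c n)%:R.
Proof.
move=> nd hc4 hexp hQ.
have hE := expR_gt0 (c0%:R : R).
have hP0 : (0 < Pcount a b c n)%N by rewrite -(ltr0n R); lra.
have finN : finite_set (cut_set a b c n) := card_pos_fin hP0.
have hQ0 : (0 < Pcount a b c (n + c0))%N.
  by apply: leq_trans hQ; rewrite muln_gt0 hP0.
have finM : finite_set (cut_set a b c (n + c0)) := card_pos_fin hQ0.
set M := (n + c0)%N in finM hQ0 hQ *.
set Xs := enum_fset (fset_set (cut_set a b c M)).
have memX : forall x, x \in Xs <-> cut_set a b c M x by move=> x; exact: memE.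
pose id := idx a b c M.
set del := expR (c0%:R : R) / (Pcount a b c n)%:R.
have hdel : 0 < del by apply: divr_gt0 => //; rewrite ltr0n.
have hXu : uniq Xs by exact: fset_uniq.
have h01 : forall x, x \in Xs -> 0 <= x <= 1.
  by move=> x /memX /idx_spec [[]].
have hidx : forall x, x \in Xs -> (id x <= n + c0)%N.
  by move=> x /memX /idx_spec [].
have hG : forall x y, x \in Xs -> y \in Xs -> x < y -> id x = id y ->
    exists w, w \in Xs /\ x < w < y /\ (id w < id x)%N.
  move=> x y /memX hx /memX hy hxy he.
  have [gx hxM _] := idx_spec hx.
  have [gy _ _] := idx_spec hy.
  rewrite -/id -he in gy.
  have [w [j [hw [hj gw]]]] := G_main nd hxy gx gy.
  have hwM : cut_set a b c M w by exists j; split => //; apply: leq_trans (ltnW hj) hxM.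
  exists w; split; first exact/memX.
  split => //; have [_ _ hmin] := idx_spec hwM; exact: leq_ltn_trans (hmin _ gw) hj.
case: (comb_main hXu h01 hidx hdel hG).
- move=> [x [y [z [hx [hy [hz [hnx [hxy [hyz [hzM [hmm [hcond [d1 [d2 d3]]]]]]]]]]]]]].
  have [gx _ _] := idx_spec (proj1 (memX x) hx).
  have [gy _ _] := idx_spec (proj1 (memX y) hy).
  have [gz _ _] := idx_spec (proj1 (memX z) hz).
  exists x, y, z, (id x), (id y), (id z); split.
    split; first by rewrite hxy hyz.
    do 3 (split => //); split => //.
    move=> w hw hcw.
    have hwM : cut_set a b c M w := cut_mono hzM hcw.
    apply: hcond => //; first exact/memX.
    by apply/(cut_idx hzM hwM).
  have hyx : (n < id y)%N := ltn_trans hnx hxy.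
  have hzx : (n < id z)%N := ltn_trans hyx hyz.
  do 3 (split => //); split; first exact: leq_trans (ltnW (ltn_trans hxy hyz)) hzM.
  by split; [exact: leq_trans (ltnW hyz) hzM | split].
- move=> hcnt; exfalso.
  set P := Pcount a b c n in hexp hQ hdel hcnt hP0 *.
  have hold : count (fun x => (id x <= n)%N) Xs = P.
    rewrite -size_filter /P /Pcount; apply: perm_size; apply: uniq_perm;
      [exact: filter_uniq | exact: fset_uniq |].
    move=> x; rewrite mem_filter; apply/idP/idP.
    + move=> /andP [hi /memX hxM]; apply/memE => //.
      by apply/(cut_idx (leq_addr c0 n) hxM).
    + move=> /(memE _ finN) hxn.
      have hxM : cut_set a b c M x := cut_mono (leq_addr c0 n) hxn.
      rewrite (proj2 (memX x) hxM) andbT.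
      by apply/(cut_idx (leq_addr c0 n) hxM).
  have hnew : (count (fun x => (n < id x)%N) Xs + P)%N = Pcount a b c M.
    have -> : Pcount a b c M = size Xs by [].
    rewrite -hold addnC -(count_predC (fun x => (id x <= n)%N)).
    by congr addn; apply: eq_count => x /=; rewrite ltnNge.
  rewrite hold in hcnt.
  set cnew := count _ Xs in hnew hcnt.
  have hge : ((3 + 2 * c0) * P <= cnew)%N.
    have := hQ; rewrite -hnew; lia.
  have hge' : ((3 + 2 * c0) * P)%:R <= cnew%:R :> R by rewrite ler_nat.
  rewrite natrM natrD natrM in hge'.
  have hEc := expR_ge1Dx (c0%:R : R).
  set E := expR (c0%:R : R) in hexp hEc hE hcnt hge' hdel.
  set cR := c0%:R : R in hEc hcnt hge'.
  set p := P%:R : R in hexp hcnt hge'.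
  have pp : 0 < p by lra.
  have e1 : 1 / del = p / E by rewrite /del -/E -/P -/p; field; apply/andP; split; rewrite gt_eqF.
  rewrite e1 -natr1 -/p in hcnt.
  set t := p / E in hcnt.
  have htE : t * E = p by rewrite /t mulfVK ?gt_eqF.
  have ht0 : 0 < t by rewrite /t divr_gt0.
  have hc0 : 0 <= cR by rewrite /cR ler0n.
  have hcE : cR < E by lra.
  have hct : cR * t < p by rewrite -htE; nra.
  have hP1 : (P.+1)%:R = p + 1 :> R by rewrite -natr1.
  rewrite hP1 in hcnt.
  have hexp' : E < p by [].
  clear -hcnt hge' hct hcE hexp' hc0 pp.
  nra.
Qed.
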